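(* Let $T=(p,q:F\to E)$ be an LR textile system with $p$ surjective and $F$ source-free, and let $\Lambda=\Lambda_T$. Suppose that for each $z\in E^0$ we have a partition $\{\mathcal E^1_z,\dots,\mathcal E^{m(z)}_z\}$ of $zE^1$ into nonempty sets such that for each $u\in F^0$ there are $z\in E^0$ and $j$ with $q(uF^1)\subseteq\mathcal E^j_z$. For $v\in F^0$, $1\le i\le m(p(v))$, set $\mathcal F^i_v=vF^1\cap p^{-1}(\mathcal E^i_{p(v)})$, and for $z\in E^0$, $1\le i\le m(z)$, set $\mathcal G^i_z=\mathcal E^i_z\sqcup r_F(q^{-1}(\mathcal E^i_z))$. Let $\widetilde F$ be the directed-graph insplit of $F$ with respect to $\{\mathcal F^i_v\}$ and $\widetilde E$ that of $E$ with respect to $\{\mathcal E^i_z\}$, and define $\tilde p(v^i)=p(v)^i$, $\tilde p(\lambda^i)=p(\lambda)^i$, $\tilde q(v^i)=q(v)^j$, $\tilde q(\lambda^i)=q(\lambda)^j$ for $\lambda\in F^1$, $v\in F^0$, where (for $\lambda$) $v=s(\lambda)$ and $j$ is the index with $q(vF^1)\subseteq\mathcal E^j_{q(v)}$. Then (1) $\{\mathcal F^i_v\}$ is a partition of $F^1$ into nonempty sets, $\tilde p,\tilde q:\widetilde F\to\widetilde E$ are well-defined graph homomorphisms and $\widetilde T=(\tilde p,\tilde q:\widetilde F\to\widetilde E)$ is an LR textile system; (2) $\{\mathcal G^i_z\}$ is a partition of $\Lambda^1=E^1\sqcup F^0$ satisfying the pairing condition; (3) the 2-graph $\Lambda_{\widetilde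 T}$ coincides with the 2-graph $\Lambda_I$ obtained by 2-graph insplitting $\Lambda$ with respect to $\{\mathcal G^i_z\}$.
   Context: Directed graph $E=(E^0,E^1,r,s)$, $zE^1=r^{-1}(z)$; $F$ source-free: $r$ onto $F^0$. Textile system $T=(p,q:F\to E)$: graph homomorphisms $p,q$ (commuting with $r,s$) with $f\mapsto(r(f),p(f),s(f),q(f))$ injective on $F^1$. LR: $p$ has unique $r$-path lifting (for $v\in F^0,e\in E^1$ with $p(v)=r(e)$, exactly one $f\in F^1$ with $r(f)=v,p(f)=e$) and $q$ has unique $s$-path lifting (same with $s$). Directed-graph insplitting: with partitions of $vF^1$ into nonempty $\mathcal F^1_v,\dots,\mathcal F^{m(v)}_v$, the insplit graph has vertices $v^i$, edges $f^j$ ($1\le j\le m(s(f))$), $s(f^j)=s(f)^j$, $r(f^j)=r(f)^k$ if $f\in\mathcal F^k_{r(f)}$. 2-graph: category $\Lambda$ with degree functor $d:\Lambda\to\mathbb N^2$ having unique factorization; $\Lambda^m=d^{-1}(m)$; $\lambda(m,n)$ is the factor of degree $n-m$ at position $[m,n]$; determined by its 1-skeleton and commuting squares. $\Lambda_T$: vertices $E^0$, color-1 edges $E^1$, color-2 edges $F^0$ with $r(w)=q(w)$, $s(w)=p(w)$; commuting squares $ve\sim e'w$ iff some $f\in F^1$ has $r(f)=v,s(f)=w,p(f)=e,q(f)=e'$. The pairing condition for a partition $\{\mathcal G^j_z\}$ of $\Lambda^1$ (with $\{\mathcal G^j_z\}_j$ a partition of the edges with range $z$): for every $\lambda\in\Lambda^{\varepsilon_1+\varepsilon_2}$,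 $\lambda(0,\varepsilon_1)$ and $\lambda(0,\varepsilon_2)$ are in the same set. Insplit 2-graph $\Lambda_I$: vertices $z^i$; edges $f^i$ ($1\le i\le m(s(f))$), same degree, $s(f^i)=s(f)^i$, $r(f^i)=r(f)^j$ where $f\in\mathcal G^j_{r(f)}$; commuting squares $f^ig^k\sim_I a^jb^k$ iff $g\in\mathcal G^i_{s(f)}$, $b\in\mathcal G^j_{s(a)}$, $fg\sim ab$ in $\Lambda$. ''Coincides'' means: same vertices $z^i$, same edges $e^i$ and $v^i$ with same degree, range, source and same commuting squares. *)

(* Defs.v *)
From mathcomp Require Import all_boot.
Set Implicit Arguments.
Unset Strict Implicit.
Unset Printing Implicit Defensive.

(* A genuine graph E = (E^0,E^1,r,s) is [full_graph r s] (every        *)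
(* element valid); insplit graphs live on raw carriers V*nat, E*nat    *)
(* and their vertex/edge sets are cut out by the predicates okV/okE.   *)
Record pgraph := PGraph {
  gV : Type; gE : Type;
  okV : gV -> Prop; okE : gE -> Prop;
  rg : gE -> gV; sg : gE -> gV }.
Arguments okV {p} _. Arguments okE {p} _. Arguments rg {p} _. Arguments sg {p} _.

Definition full_graph (V E : Type) (r s : E -> V) : pgraph :=
  @PGraph V E (fun _ => True) (fun _ => True) r s.

Definition wf_graph (G : pgraph) : Prop :=
  forall e : gE G, okE e -> okV (rg e) /\ okV (sg e).

Definition graph_hom (F E : pgraph) (hV : gV F -> gV E) (hE : gE F -> gE E) : Prop :=
  (forall v, okV v -> okV (hV v)) /\
  (forall f, okE f -> okE (hE f) /\ rg (hE f) = hV (rg f) /\ sg (hE f) = hV (sg f)).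

Definition textile (F E : pgraph) (pV qV : gV F -> gV E) (pE qE : gE F -> gE E) : Prop :=
  graph_hom pV pE /\ graph_hom qV qE /\
  (forall f g, okE f -> okE g -> rg f = rg g -> pE f = pE g -> sg f = sg g ->
     qE f = qE g -> f = g).

Definition unique_r_lifting (F E : pgraph) (hV : gV F -> gV E) (hE : gE F -> gE E) :=
  forall v e, okV v -> okE e -> hV v = rg e ->
    exists! f, okE f /\ rg f = v /\ hE f = e.

Definition unique_s_lifting (F E : pgraph) (hV : gV F -> gV E) (hE : gE F -> gE E) :=
  forall v e, okV v -> okE e -> hV v = sg e ->
    exists! f, okE f /\ sg f = v /\ hE f = e.

Definition LR_textile (F E : pgraph) (pV qV : gV F -> gV E) (pE qE : gE F -> gE E) :=
  textile pV qV pE qE /\ unique_r_lifting pV pE /\ unique_s_lifting qV qE.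

(* An indexed partition {P^0_v,...,P^(m v - 1)_v} of vG^1 into nonempty  *)
(* sets, given by the block index idx e of each edge e (e is in block    *)
(* idx e of the partition of (r e)G^1). Indices are 0-based.             *)
Definition is_ipartition (G : pgraph) (m : gV G -> nat) (idx : gE G -> nat) : Prop :=
  (forall e, okE e -> idx e < m (rg e)) /\
  (forall v i, okV v -> i < m v -> exists e, okE e /\ rg e = v /\ idx e = i).

(* Directed-graph insplitting: vertices v^i = (v,i), i < m v;            *)
(* edges f^j = (f,j), j < m (s f); s(f^j) = s(f)^j; r(f^j) = r(f)^(idx f) *)
Definition insplit (G : pgraph) (m : gV G -> nat) (idx : gE G -> nat) : pgraph :=
  @PGraph (gV G * nat) (gE G * nat)
    (fun x => okV x.1 /\ x.2 < m x.1)
    (fun y => okE y.1 /\ y.2 < m (sg y.1))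
    (fun y => (rg y.1, idx y.1))
    (fun y => (sg y.1, y.2)).

(* 2-graphs, given by their 1-skeleton (colour false = 1, true = 2)    *)
(* and their commuting squares: ksq x y a b means  x y ~ a b  (x,a at  *)
(* the range end).                                                     *)
Record kgraph2 := KGraph2 {
  kV : Type; kE : Type;
  okkV : kV -> Prop; okkE : kE -> Prop;
  kdeg : kE -> bool;
  kr : kE -> kV; ks : kE -> kV;
  ksq : kE -> kE -> kE -> kE -> Prop }.
Arguments okkV {k} _. Arguments okkE {k} _. Arguments kdeg {k} _.
Arguments kr {k} _. Arguments ks {k} _. Arguments ksq {k} _ _ _ _.

(* Lambda_T: vertices E^0, colour-1 edges E^1, colour-2 edges F^0 with  *)
(* r(w) = q(w), s(w) = p(w); squares v e ~ e' w iff some f in F^1 has   *)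
(* r f = v, s f = w, p f = e, q f = e' (relation taken symmetric).       *)
Definition LambdaT (F E : pgraph) (pV qV : gV F -> gV E) (pE qE : gE F -> gE E)
  : kgraph2 :=
  @KGraph2 (gV E) (gE E + gV F)
    (fun z => okV z)
    (fun x => match x with inl e => okE e | inr w => okV w end)
    (fun x => match x with inl _ => false | inr _ => true end)
    (fun x => match x with inl e => rg e | inr w => qV w end)
    (fun x => match x with inl e => sg e | inr w => pV w end)
    (fun x y a b =>
       exists f, okE f /\
         ((x = inr (rg f) /\ y = inl (pE f) /\ a = inl (qE f) /\ b = inr (sg f)) \/
          (x = inl (qE f) /\ y = inr (sg f) /\ a = inr (rg f) /\ b = inl (pE f)))).

(* A partition {G^i_z : i < m z} of Lambda^1 (blocks given as predicates *)
(* mem z i), each {G^i_z}_i a partition of z Lambda^1 into nonempty sets. *)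
Definition is_kpartition (L : kgraph2) (m : kV L -> nat)
  (mem : kV L -> nat -> kE L -> Prop) : Prop :=
  (forall z i x, okkV z -> i < m z -> mem z i x -> okkE x /\ kr x = z) /\
  (forall x, okkE x -> exists! i, i < m (kr x) /\ mem (kr x) i x) /\
  (forall z i, okkV z -> i < m z -> exists x, okkE x /\ mem z i x).

(* pairing condition: for lambda of degree (1,1), factored as x y ~ a b, *)
(* the range-end edges lambda(0,e1), lambda(0,e2) (= x and a) lie in the *)
(* same block.                                                           *)
Definition pairing (L : kgraph2) (m : kV L -> nat)
  (mem : kV L -> nat -> kE L -> Prop) : Prop :=
  forall x y a b, okkE x -> okkE y -> okkE a -> okkE b -> ksq x y a b ->
    exists i, i < m (kr x) /\ mem (kr x) i x /\ mem (kr x) i a.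

(* 2-graph insplitting with respect to the partition mem, where idx x is *)
(* the index of the block of G_{r x} containing x:                        *)
(* vertices z^i, edges f^i (i < m (s f)), s(f^i) = s(f)^i,                *)
(* r(f^i) = r(f)^(idx f);  f^i g^k ~ a^j b^k iff g in G^i_{s f},          *)
(* b in G^j_{s a} and f g ~ a b.                                          *)
Definition LambdaI (L : kgraph2) (m : kV L -> nat) (idx : kE L -> nat)
  (mem : kV L -> nat -> kE L -> Prop) : kgraph2 :=
  @KGraph2 (kV L * nat) (kE L * nat)
    (fun z => okkV z.1 /\ z.2 < m z.1)
    (fun x => okkE x.1 /\ x.2 < m (ks x.1))
    (fun x => kdeg x.1)
    (fun x => (kr x.1, idx x.1))
    (fun x => (ks x.1, x.2))
    (fun x y a b => y.2 = b.2 /\ mem (ks x.1) x.2 y.1 /\ mem (ks a.1) a.2 b.1 /\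
                    ksq x.1 y.1 a.1 b.1).

(* "coincide" via the naming maps phV (vertices), phE (edges):          *)
(* bijections on valid elements preserving degree, range, source and     *)
(* commuting squares.                                                    *)
Definition coincide (L1 L2 : kgraph2) (phV : kV L1 -> kV L2) (phE : kE L1 -> kE L2)
  : Prop :=
  (forall z, okkV z <-> okkV (phV z)) /\
  (forall z', okkV z' -> exists z, okkV z /\ phV z = z') /\
  (forall z z', okkV z -> okkV z' -> phV z = phV z' -> z = z') /\
  (forall x, okkE x <-> okkE (phE x)) /\
  (forall x', okkE x' -> exists x, okkE x /\ phE x = x') /\
  (forall x x', okkE x -> okkE x' -> phE x = phE x' -> x = x') /\
  (forall x, okkE x -> kdeg (phE x) = kdeg x /\ kr (phE x) = phV (kr x) /\
                       ks (phE x) = phV (ks x)) /\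
  (forall x y a b, okkE x -> okkE y -> okkE a -> okkE b ->
     (ksq x y a b <-> ksq (phE x) (phE y) (phE a) (phE b))).

(* naming: e^i |-> (e,i) as an edge of Lambda_I, v^i |-> (v,i) *)
Definition name_edge (A B : Type) (x : (A * nat) + (B * nat)) : (A + B) * nat :=
  match x with inl (e, i) => (inl e, i) | inr (v, i) => (inr v, i) end.

(* Main.v *)
Require Import Defs.
From mathcomp Require Import all_boot.
Theorem theorem7p11
  (VE EE VF EF : Type) (rE sE : EE -> VE) (rF sF : EF -> VF)
  (pV qV : VF -> VE) (pE qE : EF -> EE)
  (m : VE -> nat) (idxE : EE -> nat) :
  (* T = (p,q : F -> E) is an LR textile system *)
  LR_textile (F := full_graph rF sF) (E := full_graph rE sE) pV qV pE qE ->
  (* p is surjective *)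
  (forall z : VE, exists v, pV v = z) ->
  (forall e : EE, exists f, pE f = e) ->
  (* F is source-free *)
  (forall v : VF, exists f, rF f = v) ->
  (* {E^i_z : i < m z} is a partition of zE^1 into nonempty sets *)
  is_ipartition (G := full_graph rE sE) m idxE ->
  (* for each u in F^0 there are z, j with q(uF^1) contained in E^j_z *)
  (forall u : VF, exists z j, forall f, rF f = u -> rE (qE f) = z /\ idxE (qE f) = j) ->
  (* jq v := the index j with q(vF^1) contained in E^j_{q(v)} *)
  forall jq : VF -> nat, (forall f, idxE (qE f) = jq (rF f)) ->
  let F := full_graph rF sF in
  let E := full_graph rE sE in
  (* F^i_v = vF^1 /\ p^{-1}(E^i_{p v}): block index of f is idxE (p f) *)
  let mF := fun v => m (pV v) in
  let idxF := fun f => idxE (pE f) in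
  let Ft := insplit (G := F) mF idxF in
  let Et := insplit (G := E) m idxE in
  let ptV := fun x : VF * nat => (pV x.1, x.2) in
  let ptE := fun y : EF * nat => (pE y.1, y.2) in
  let qtV := fun x : VF * nat => (qV x.1, jq x.1) in
  let qtE := fun y : EF * nat => (qE y.1, jq (sF y.1)) in
  let L := LambdaT (F := F) (E := E) pV qV pE qE in
  (* G^i_z = E^i_z disjoint union r_F(q^{-1}(E^i_z)) *)
  let Gmem := fun (z : VE) (i : nat) (x : EE + VF) =>
    match x with
    | inl e => rE e = z /\ idxE e = i
    | inr u => exists f, rF f = u /\ rE (qE f) = z /\ idxE (qE f) = i
    end in
  (* (1) *)
  (is_ipartition (G := F) mF idxF /\
   wf_graph Ft /\ wf_graph Et /\
   graph_hom (F := Ft) (E := Et) ptV ptE /\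
   graph_hom (F := Ft) (E := Et) qtV qtE /\
   LR_textile (F := Ft) (E := Et) ptV qtV ptE qtE) /\
  (* (2) *)
  (is_kpartition (L := L) m Gmem /\ pairing (L := L) m Gmem) /\
  (* (3): with idxL x the index of the block G^i_{r x} containing x *)
  (forall idxL : EE + VF -> nat,
     (forall x, okkE (k := L) x -> idxL x < m (kr (k := L) x) /\ Gmem (kr (k := L) x) (idxL x) x) ->
     coincide (L1 := LambdaT (F := Ft) (E := Et) ptV qtV ptE qtE)
              (L2 := LambdaI (L := L) m idxL Gmem)
              (fun z => z) (@name_edge EE VF)).
Proof.
Proof.
intros HLR HpsV HpsE Hsf Hpart Hq jq Hjq. cbv zeta.
destruct HLR as [[[_ HpE] [[_ HqE] Hinj]] [Hrl Hsl]].
destruct Hpart as [Hlt Hne]. simpl in *. rewrite /unique_r_lifting /unique_s_lifting /= in Hrl Hsl.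
have prE : forall f, rE (pE f) = pV (rF f) by move=> f; case: (HpE f I) => _ [].
have psE : forall f, sE (pE f) = pV (sF f) by move=> f; case: (HpE f I) => _ [].
have qrE : forall f, rE (qE f) = qV (rF f) by move=> f; case: (HqE f I) => _ [].
have qsE : forall f, sE (qE f) = qV (sF f) by move=> f; case: (HqE f I) => _ [].
have Hlt' : forall e, idxE e < m (rE e) by move=> e; exact: Hlt e I.
have jqlt : forall v, jq v < m (qV v).
  move=> v; case: (Hsf v) => f <-; rewrite -Hjq -qrE; exact: Hlt'.
have Gin : forall v, exists g, rF g = v /\ rE (qE g) = qV v /\ idxE (qE g) = jq v.
  move=> v; case: (Hsf v) => g Hg; exists g; subst v; rewrite qrE -Hjq; auto.
split; [|split].
-
  split; [split|split; [|split; [|split; [|split]]]].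
  + move=> f _ /=; rewrite -prE; exact: Hlt'.
  + move=> v i _ Hi; case: (Hne (pV v) i I Hi) => e [_ [He1 He2]].
    case: (Hrl v e I I (esym He1)) => f [[_ [Hf1 Hf2]] _].
    exists f; rewrite /= Hf2; auto.
  + move=> [f j] /= [_ Hj]; rewrite -prE; split; split => //; exact: Hlt'.
  + move=> [e j] /= [_ Hj]; split; split => //; exact: Hlt'.
  + split; first by move=> [v i] /= [_ Hi].
    move=> [f j] /= [_ Hj]; rewrite prE psE; split => //; by rewrite -psE.
  + split; first by move=> [v i] /= [_ _]; split => //; exact: jqlt.
    move=> [f j] /= [_ Hj]; rewrite qrE qsE Hjq; split => //; split => //; exact: jqlt.
  + split; [split; [|split]|split].
    * split; first by move=> [v i] /= [_ Hi].
      move=> [f j] /= [_ Hj]; rewrite prE psE; split => //; by rewrite -psE.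
    * split; first by move=> [v i] /= [_ _]; split => //; exact: jqlt.
      move=> [f j] /= [_ Hj]; rewrite qrE qsE Hjq; split => //; split => //; exact: jqlt.
    * move=> [f j] [g k] /= _ _ [Hr _] [Hp Hjk] [Hs _] [Hqq _]; subst k.
      by rewrite (Hinj f g I I Hr Hp Hs Hqq).
    * move=> [v i] [e j] /= [_ Hi] [_ Hj] [Hv Hi'].
      case: (Hrl v e I I Hv) => f [[_ [Hf1 Hf2]] Hu].
      exists (f, j); split.
      -- rewrite /= -psE Hf1 Hf2 Hi'; auto.
      -- move=> [g k] /= [[_ Hk] [[Hg1 Hg2] [Hg3 Hg4]]].
         by rewrite (Hu g (conj I (conj Hg1 Hg3))) Hg4.
    * move=> [v i] [e j] /= [_ Hi] [_ Hj] [Hv Hi'].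
      case: (Hsl v e I I Hv) => f [[_ [Hf1 Hf2]] Hu].
      exists (f, i); split.
      -- rewrite /= Hf1 Hf2 Hi'; auto.
      -- move=> [g k] /= [[_ Hk] [[Hg1 Hg2] [Hg3 Hg4]]].
         by rewrite (Hu g (conj I (conj Hg1 Hg3))) Hg2.
-
  split; [split; [|split]|].
  + move=> z i [e|u] _ Hi /=.
    * by case=> ->.
    * by case=> f [<- [<- _]]; rewrite qrE.
  + move=> [e|u] _ /=.
    * exists (idxE e); split; first by split=> //; exact: Hlt'.
      by move=> i [_ [_ ->]].
    * case: (Gin u) => g [Hg1 [Hg2 Hg3]].
      exists (jq u); split; first by split; [exact: jqlt | exists g].
      move=> i [_ [f [Hf1 [_ <-]]]]; by rewrite Hjq Hf1.
  + move=> z i _ Hi; case: (Hne z i I Hi) => e [_ H]; by exists (inl e).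
  + move=> x y a b _ _ _ _ [f [_ [[-> [_ [-> _]]]|[-> [_ [-> _]]]]]] /=.
    * exists (idxE (qE f)); rewrite -qrE; split; first exact: Hlt'.
      split; first by exists f. by [].
    * exists (idxE (qE f)); split; first exact: Hlt'.
      split; first by []. by exists f.
-
  move=> idxL HidxL.
  have iL1 : forall e, idxL (inl e) = idxE e.
    by move=> e; case: (HidxL (inl e) I) => _ [_ ->].
  have iL2 : forall v, idxL (inr v) = jq v.
    move=> v; case: (HidxL (inr v) I) => _ [f [Hf1 [_ <-]]]; by rewrite Hjq Hf1.
  split; [|split; [|split; [|split; [|split; [|split; [|split]]]]]].
  + by move=> z.
  + move=> z' H; by exists z'.
  + by move=> z z' _ _.
  + by move=> [[e i]|[v i]].
  + move=> [[e|v] i] H; [exists (inl (e, i)) | exists (inr (v, i))]; by split.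
  + move=> [[e i]|[v i]] [[e' i']|[v' i']] _ _ //= [-> ->] //.
  + move=> [[e i]|[v i]] _ /=; by rewrite ?iL1 ?iL2.
  + move=> x y a b Hx Hy Ha Hb; split.
    * move=> [[f k] [/= [_ Hk] [[-> [-> [-> ->]]]|[-> [-> [-> ->]]]]]] /=.
      -- split=> //; split; first by rewrite prE.
         split; first by case: (Gin (sF f)) => g [? [? ?]]; exists g; rewrite qsE.
         by exists f; split=> //; left.
      -- split=> //; split; first by case: (Gin (sF f)) => g [? [? ?]]; exists g; rewrite qsE.
         split; first by rewrite prE.
         by exists f; split=> //; right.
    * move: x y a b Hx Hy Ha Hb => [[x i]|[x i]] [[y k]|[y k]] [[a j]|[a j]] [[b l]|[b l]] /= Hx Hy Ha Hb;
      move=> [/= Hkl [Gy [Gb [f [_ [[Ex [Ey [Ea Eb]]]|[Ex [Ey [Ea Eb]]]]]]]]]; try discriminate.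
      all: move: Ex Ey Ea Eb => [?] [?] [?] [?]; subst l; subst.
      -- case: Gy => g [Hg1 [_ Hg3]]; case: Gb => _ Hj.
         exists (f, k); split; first by split=> //; case: Hy.
         right; rewrite /= -Hg3 Hjq Hg1 Hj; auto.
      -- case: Gb => g [Hg1 [_ Hg3]]; case: Gy => _ Hi.
         exists (f, k); split; first by split=> //; case: Hb.
         left; rewrite /= -Hg3 Hjq Hg1 Hi; auto.
Qed.
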